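(* Let $\delta=\ln 3$, let $X\subset\mathbb{H}^n$ be finite with $|X|\le 2^c+2$ for some $c>0$, and let $(T,p)$ be a Gromov approximating tree for $X$. Let $x_1,x_2,x_3\in X$, $\Delta=[x_1x_2x_3]\subset\mathbb{H}^n$ the geodesic triangle, $T_\Delta\subset T$ the tripod spanned by $p(x_1),p(x_2),p(x_3)$ with branch point $o$, and $o_{ij}\in[x_ix_j]$ the internal points of $\Delta$, i.e. the points with $d(x_i,o_{ij})=\frac12\big(d(x_i,x_j)+d(x_i,x_l)-d(x_j,x_l)\big)$ where $\{i,j,l\}=\{1,2,3\}$. Let $p_\Delta:\Delta\to T_\Delta$ be the map that sends $x_i\mapsto p(x_i)$, $o_{ij}\mapsto o$, and maps each segment $[x_io_{ij}]$ onto $[p(x_i)o]$ by the dilation $d_T(p(x_i),p_\Delta(z))=\frac{d_T(p(x_i),o)}{d(x_i,o_{ij})}\,d(x_i,z)$. Then $p_\Delta$ is a $(1,4c\delta+2\delta)$-quasi-isometry, where $\Delta$ carries the metric restricted from $\mathbb{H}^n$.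
   Context: A Gromov approximating tree for a finite $X\subset\mathbb{H}^n$ with $|X|\le 2^c+2$ is a pair $(T,p)$ where $T$ is a finite metric tree and $p:X\to T$ maps $X$ to vertices of $T$ such that every leaf (valence-one vertex) of $T$ lies in $p(X)$, and $d(x_1,x_2)-2c\delta\le d_T(p(x_1),p(x_2))\le d(x_1,x_2)$ for all $x_1,x_2\in X$, with $\delta=\ln 3$. Maps $f:X\to Y$ is an $(L,A)$-quasi-isometry if $-A+\frac1L d_X(a,b)\le d_Y(f(a),f(b))\le Ld_X(a,b)+A$ for all $a,b$, and there is $\bar f:Y\to X$ satisfying the analogous inequalities with $d_X(a,\bar f f(a))\le A$ and $d_Y(y,f\bar f(y))\le A$ for all $a\in X,y\in Y$. *)

(* Defs.v *)
From Stdlib Require Import Reals List.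
Open Scope R_scope.

Fixpoint sum1 (k : nat) (f : nat -> R) : R :=
  match k with
  | O => 0
  | S m => sum1 m f + f (S m)
  end.

Definition mink (n : nat) (x y : nat -> R) : R :=
  - (x 0%nat * y 0%nat) + sum1 n (fun i => x i * y i).

Definition Hpt (n : nat) : Type :=
  { x : nat -> R | mink n x x = -1 /\ 0 < x 0%nat /\ (forall i, (n < i)%nat -> x i = 0) }.

Definition arcosh (t : R) : R := ln (t + sqrt (t * t - 1)).

Definition dH (n : nat) (x y : Hpt n) : R :=
  arcosh (- mink n (proj1_sig x) (proj1_sig y)).

Definition delta : R := ln 3.

(* z lies on the geodesic segment [a,b] (in a uniquely geodesic space) *)
Definition between {U : Type} (d : U -> U -> R) (a z b : U) : Prop :=
  d a z + d z b = d a b.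

Definition is_metric {U : Type} (d : U -> U -> R) : Prop :=
  (forall x y, 0 <= d x y) /\
  (forall x y, d x y = 0 <-> x = y) /\
  (forall x y, d x y = d y x) /\
  (forall x y z, d x z <= d x y + d y z).

Definition is_geodesic {U : Type} (d : U -> U -> R) : Prop :=
  forall a b, exists g : R -> U, g 0 = a /\ g (d a b) = b /\
    forall s t, 0 <= s <= d a b -> 0 <= t <= d a b -> d (g s) (g t) = Rabs (s - t).

Definition zero_hyperbolic {U : Type} (d : U -> U -> R) : Prop :=
  forall x y z w, d x y + d z w <= Rmax (d x z + d y w) (d x w + d y z).

(* A finite metric tree with vertex set V: a geodesic 0-hyperbolic metric
   space (an R-tree) which is the union of the finitely many segments
   between points of V. *)
Definition finite_metric_tree {T : Type} (d : T -> T -> R) (V : list T) : Prop :=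
  is_metric d /\ is_geodesic d /\ zero_hyperbolic d /\
  (forall z, exists a b, In a V /\ In b V /\ between d a z b).

Definition is_leaf {T : Type} (d : T -> T -> R) (v : T) : Prop :=
  forall a b, between d a v b -> v = a \/ v = b.

Definition gromov_approx_tree {U T : Type} (c : R) (dX : U -> U -> R) (X : list U)
    (dT : T -> T -> R) (V : list T) (p : U -> T) : Prop :=
  finite_metric_tree dT V /\
  (forall x, In x X -> In (p x) V) /\
  (forall v, In v V -> is_leaf dT v -> exists x, In x X /\ p x = v) /\
  (forall x1 x2, In x1 X -> In x2 X ->
      dX x1 x2 - 2 * c * delta <= dT (p x1) (p x2) <= dX x1 x2).

Definition quasi_isometry {U V : Type} (dU : U -> U -> R) (A : U -> Prop)
    (dV : V -> V -> R) (B : V -> Prop) (f : U -> V) (L K : R) : Prop :=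
  (forall a, A a -> B (f a)) /\
  (forall a b, A a -> A b ->
      - K + (1 / L) * dU a b <= dV (f a) (f b) <= L * dU a b + K) /\
  exists g : V -> U,
    (forall y, B y -> A (g y)) /\
    (forall y z, B y -> B z ->
      - K + (1 / L) * dV y z <= dU (g y) (g z) <= L * dV y z + K) /\
    (forall a, A a -> dU a (g (f a)) <= K) /\
    (forall y, B y -> dV y (f (g y)) <= K).

Definition dilation_on {U T : Type} (dX : U -> U -> R) (dT : T -> T -> R)
    (pD : U -> T) (xi oij : U) (pxi o : T) : Prop :=
  forall z, between dX xi z oij ->
    between dT pxi (pD z) o /\
    dT pxi (pD z) = dT pxi o / dX xi oij * dX xi z.

(* Main.v *)
Require Import Defs.
From Stdlib Require Import Reals List Lra Lia Psatz Classical ClassicalEpsilon.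
Open Scope R_scope.

Lemma sum1_ext k f g : (forall i, (1 <= i <= k)%nat -> f i = g i) -> sum1 k f = sum1 k g.
Proof.
  induction k; intros H; simpl; auto.
  rewrite IHk; [rewrite (H (S k)) by lia; reflexivity|intros; apply H; lia].
Qed.

Lemma sum1_lin k a b f g : sum1 k (fun i => a * f i + b * g i) = a * sum1 k f + b * sum1 k g.
Proof. induction k; simpl; [ring|rewrite IHk; ring]. Qed.

Lemma sum1_nonneg k f : (forall i, 0 <= f i) -> 0 <= sum1 k f.
Proof. intros H; induction k; simpl; [lra|specialize (H (S k)); lra]. Qed.

Lemma sum1_sq_zero k f : sum1 k (fun i => f i * f i) = 0 -> forall i, (1 <= i <= k)%nat -> f i = 0.
Proof.
  induction k; intros H i Hi; [lia|]. simpl in H.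
  assert (0 <= sum1 k (fun i => f i * f i)) by (apply sum1_nonneg; intros; nra).
  assert (f (S k) = 0) by nra.
  destruct (Nat.eq_dec i (S k)); [subst; auto|]. apply IHk; [nra|lia].
Qed.

Lemma sum1_CS k f g : (sum1 k (fun i => f i * g i))^2 <= sum1 k (fun i => f i * f i) * sum1 k (fun i => g i * g i).
Proof.
  induction k; simpl; [lra|].
  set (A := sum1 k (fun i => f i * g i)) in *.
  set (P := sum1 k (fun i => f i * f i)) in *.
  set (Q := sum1 k (fun i => g i * g i)) in *.
  assert (0 <= P) by (apply sum1_nonneg; intros; nra).
  assert (0 <= Q) by (apply sum1_nonneg; intros; nra).
  set (a := f (S k)); set (b := g (S k)).
  assert (HS: (A * a * b) <= sqrt P * sqrt Q * Rabs (a*b)).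
  { assert (Rabs A <= sqrt P * sqrt Q).
    { rewrite <- sqrt_mult by lra. rewrite <- sqrt_Rsqr_abs. apply sqrt_le_1_alt. unfold Rsqr. lra. }
    assert (A * a * b <= Rabs A * Rabs (a*b)).
    { rewrite <- Rabs_mult. rewrite Rmult_assoc. apply Rle_abs. }
    assert (0 <= Rabs (a*b)) by apply Rabs_pos. nra. }
  assert (Hp: sqrt P * sqrt P = P) by (apply sqrt_sqrt; lra).
  assert (Hq: sqrt Q * sqrt Q = Q) by (apply sqrt_sqrt; lra).
  assert (0 <= (sqrt P * Rabs b - sqrt Q * Rabs a)^2) by apply pow2_ge_0.
  assert (Rabs (a*b) = Rabs a * Rabs b) by apply Rabs_mult.
  assert (Rabs a * Rabs a = a * a) by (rewrite <- Rabs_mult; apply Rabs_right; nra).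
  assert (Rabs b * Rabs b = b * b) by (rewrite <- Rabs_mult; apply Rabs_right; nra).
  nra.
Qed.

Definition pt {n} (P : Hpt n) : nat -> R := proj1_sig P.

Lemma mink_sym n x y : mink n x y = mink n y x.
Proof. unfold mink. f_equal; [ring|]. apply sum1_ext; intros; ring. Qed.

Lemma mink_lin n a b x y z : mink n (fun i => a * x i + b * y i) z = a * mink n x z + b * mink n y z.
Proof.
  unfold mink. rewrite (sum1_ext n (fun i => (a * x i + b * y i) * z i) (fun i => a * (x i * z i) + b * (y i * z i))) by (intros; ring).
  rewrite sum1_lin. ring.
Qed.

Lemma mink_ext n x x' z : (forall i, (i <= n)%nat -> x i = x' i) -> mink n x z = mink n x' z.
Proof.
  intros H. unfold mink. rewrite (H 0%nat) by lia. f_equal. apply sum1_ext. intros i Hi. rewrite H by lia. auto.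
Qed.

Lemma pt_norm n (P : Hpt n) : mink n (pt P) (pt P) = -1.
Proof. destruct P as [x [H1 [H2 H3]]]; exact H1. Qed.
Lemma pt_pos n (P : Hpt n) : 0 < pt P 0%nat.
Proof. destruct P as [x [H1 [H2 H3]]]; exact H2. Qed.
Lemma pt_zero n (P : Hpt n) i : (n < i)%nat -> pt P i = 0.
Proof. destruct P as [x [H1 [H2 H3]]]; apply H3. Qed.

Lemma SL n (x : Hpt n) v : mink n v (pt x) = 0 ->
  0 <= mink n v v /\ (mink n v v = 0 -> forall i, (i <= n)%nat -> v i = 0).
Proof.
  intros H. pose proof (pt_norm n x) as Hn. pose proof (pt_pos n x) as Hp.
  unfold mink in *. set (y := pt x) in *.
  pose proof (sum1_CS n v y) as CS.
  set (A := sum1 n (fun i => v i * v i)) in *.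
  set (B := sum1 n (fun i => y i * y i)) in *.
  set (Cc := sum1 n (fun i => v i * y i)) in *.
  assert (0 <= A) by (apply sum1_nonneg; intros; nra).
  assert (Cc = v 0%nat * y 0%nat) by lra.
  assert (B = y 0%nat * y 0%nat - 1) by lra.
  assert (HA: v 0%nat * v 0%nat <= A).
  { assert ((v 0%nat * y 0%nat)^2 <= A * (y 0%nat * y 0%nat - 1)) by (rewrite <- H1, <- H2; exact CS).
    assert (0 < y 0%nat * y 0%nat) by nra. nra. }
  split; [lra|]. intros Hz.
  assert (A = v 0%nat * v 0%nat) by lra.
  assert ((v 0%nat * y 0%nat)^2 <= A * (y 0%nat * y 0%nat - 1)) by (rewrite <- H1, <- H2; exact CS).
  assert (v 0%nat = 0) by nra.
  intros i Hi. destruct i; [auto|]. apply (sum1_sq_zero n v); [fold A; nra|lia].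
Qed.

Lemma NO n (x : Hpt n) w : mink n w (pt x) = 0 -> mink n w w = 0 -> forall z, mink n w z = 0.
Proof.
  intros H1 H2 z. destruct (SL n x w H1) as [_ H]. specialize (H H2).
  rewrite (mink_ext n w (fun _ => 0)) by auto. unfold mink. simpl.
  rewrite (sum1_ext n _ (fun i => 0 * z i + 0 * z i)) by (intros; ring). rewrite sum1_lin. ring.
Qed.

Lemma CSperp n (y : Hpt n) u w : mink n u (pt y) = 0 -> mink n w (pt y) = 0 ->
  (mink n u w)^2 <= mink n u u * mink n w w.
Proof.
  intros Hu Hw.
  assert (Hq: forall l, 0 <= mink n u u + 2 * l * mink n u w + l * l * mink n w w).
  { intros l. assert (Hv: mink n (fun i => 1 * u i + l * w i) (pt y) = 0) by (rewrite mink_lin; rewrite Hu, Hw; ring).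
    destruct (SL n y _ Hv) as [Hv2 _].
    rewrite mink_lin, (mink_sym n u), (mink_sym n w), !mink_lin in Hv2.
    rewrite (mink_sym n w u) in Hv2. nra. }
  destruct (SL n y w Hw) as [Hw0 Hw1].
  destruct (Req_dec (mink n w w) 0) as [E|E].
  - assert (mink n u w = 0) by (rewrite mink_sym; apply (NO n y); auto). rewrite H, E. nra.
  - specialize (Hq (- mink n u w / mink n w w)).
    assert (0 < mink n w w) by lra.
    assert (Hq' : 0 <= mink n u u * mink n w w - (mink n u w)^2).
    { replace (mink n u u * mink n w w - (mink n u w)^2) with
        ((mink n u u + 2 * (- mink n u w / mink n w w) * mink n u w + (- mink n u w / mink n w w) * (- mink n u w / mink n w w) * mink n w w) * mink n w w) by (field; lra).
      apply Rmult_le_pos; lra. }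
    lra.
Qed.

Lemma mink_ge1 n (x y : Hpt n) : 1 <= - mink n (pt x) (pt y).
Proof.
  set (m := mink n (pt x) (pt y)).
  assert (Hv: mink n (fun i => 1 * pt x i + m * pt y i) (pt y) = 0) by (rewrite mink_lin, pt_norm; unfold m; ring).
  destruct (SL n y _ Hv) as [H _].
  rewrite mink_lin, (mink_sym n (pt x)), (mink_sym n (pt y)), !mink_lin, !pt_norm in H.
  rewrite (mink_sym n (pt y) (pt x)) in H. fold m in H.
  assert (Hpos: 0 < - m).
  { pose proof (pt_norm n x) as Nx; pose proof (pt_norm n y) as Ny.
    pose proof (pt_pos n x); pose proof (pt_pos n y).
    pose proof (sum1_CS n (pt x) (pt y)) as CS. unfold m, mink in *.
    set (xs := pt x) in *; set (ys := pt y) in *.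
    set (B1 := sum1 n (fun i => xs i * xs i)) in *.
    set (B2 := sum1 n (fun i => ys i * ys i)) in *.
    set (Cc := sum1 n (fun i => xs i * ys i)) in *.
    assert (0 <= B1) by (apply sum1_nonneg; intros; nra).
    assert (0 <= B2) by (apply sum1_nonneg; intros; nra).
    assert (Cc^2 < (xs 0%nat * ys 0%nat)^2) by nra.
    assert (0 < xs 0%nat * ys 0%nat) by nra.
    nra. }
  nra.
Qed.

Definition ch (t : R) := (exp t + exp (- t)) / 2.
Definition sh (t : R) := (exp t - exp (- t)) / 2.

Ltac hexp := unfold ch, sh, Rminus; repeat (rewrite ?exp_Ropp, ?exp_plus, ?Ropp_involutive);
  field; repeat split; apply Rgt_not_eq; apply exp_pos.

Lemma I1 s t : sh (s + t) * ch t - sh t * ch (s + t) = sh s.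
Proof. hexp. Qed.

Lemma I_ww s t : - (sh (s+t))^2 - (sh s)^2 - (sh t)^2 + 2 * sh (s+t) * sh s * ch t + 2 * sh (s+t) * sh t * ch s - 2 * sh s * sh t * ch (s+t) = 0.
Proof. hexp. Qed.

Lemma I_col d a b : (sh d)^2 * ch (a - b) = sh (d - a) * sh (d - b) + sh a * sh b + (sh (d - a) * sh b + sh a * sh (d - b)) * ch d.
Proof. hexp. Qed.

Lemma ch_sh t : (ch t)^2 - (sh t)^2 = 1.
Proof. hexp. Qed.

Lemma sh_nonneg t : 0 <= t -> 0 <= sh t.
Proof.
  intros H. unfold sh. assert (exp (-t) <= exp t).
  { destruct (Req_dec t 0); [subst; rewrite Ropp_0; lra|]. left; apply exp_increasing; lra. }
  lra.
Qed.

Lemma sh_pos t : 0 < t -> 0 < sh t.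
Proof. intros H. unfold sh. assert (exp (-t) < exp t) by (apply exp_increasing; lra). lra. Qed.

Lemma ch_even t : ch (- t) = ch t.
Proof. unfold ch. rewrite Ropp_involutive. lra. Qed.

Lemma ch_abs t : ch (Rabs t) = ch t.
Proof. destruct (Rcase_abs t); [rewrite Rabs_left by lra; apply ch_even|rewrite Rabs_right by lra; auto]. Qed.

Lemma ch_plus s t : ch (s + t) = ch s * ch t + sh s * sh t.
Proof. hexp. Qed.

Lemma ch_lt s t : 0 <= s -> s < t -> ch s < ch t.
Proof.
  intros Hs Hst.
  assert (E: ch t - ch s = (exp t - exp s) * (1 - exp (-s) * exp (-t)) / 2).
  { hexp. }
  assert (exp s < exp t) by (apply exp_increasing; lra).
  assert (exp (-s) * exp (-t) < 1).
  { rewrite <- exp_plus. rewrite <- exp_0. apply exp_increasing. lra. }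
  assert (0 < (exp t - exp s) * (1 - exp (- s) * exp (- t))) by (apply Rmult_lt_0_compat; lra).
  lra.
Qed.

Lemma ch_le_inv s t : 0 <= s -> 0 <= t -> ch s <= ch t -> s <= t.
Proof. intros Hs Ht H. destruct (Rle_lt_dec s t); auto. pose proof (ch_lt t s Ht r). lra. Qed.

Lemma ch_le s t : 0 <= s -> s <= t -> ch s <= ch t.
Proof. intros Hs H. destruct (Req_dec s t); [subst; lra|]. left; apply ch_lt; lra. Qed.

Lemma arcosh_ch t : 0 <= t -> arcosh (ch t) = t.
Proof.
  intros H. unfold arcosh.
  assert (ch t * ch t - 1 = (sh t)^2) by (pose proof (ch_sh t); nra).
  rewrite H0. rewrite <- Rsqr_pow2. rewrite sqrt_Rsqr by (apply sh_nonneg; auto).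
  replace (ch t + sh t) with (exp t) by (unfold ch, sh; field). apply ln_exp.
Qed.

Lemma ch_arcosh m : 1 <= m -> ch (arcosh m) = m.
Proof.
  intros H. unfold arcosh. set (s := sqrt (m * m - 1)).
  assert (Hs: s * s = m * m - 1) by (apply sqrt_sqrt; nra).
  assert (0 <= s) by apply sqrt_pos.
  unfold ch. rewrite exp_Ropp. rewrite exp_ln by lra.
  assert (/ (m + s) = m - s).
  { assert (0 < m + s) by lra. apply (Rmult_eq_reg_l (m + s)); [|lra]. rewrite Rinv_r by lra. nra. }
  rewrite H1. lra.
Qed.

Lemma arcosh_nonneg m : 1 <= m -> 0 <= arcosh m.
Proof.
  intros H. unfold arcosh. rewrite <- ln_1. 
  assert (0 <= sqrt (m * m - 1)) by apply sqrt_pos.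
  destruct (Req_dec (m + sqrt (m*m-1)) 1) as [E|E]; [rewrite E; lra|].
  left. apply ln_increasing; lra.
Qed.

Lemma dH_def n (x y : Hpt n) : dH n x y = arcosh (- mink n (pt x) (pt y)).
Proof. reflexivity. Qed.

Lemma ch_dH n (x y : Hpt n) : ch (dH n x y) = - mink n (pt x) (pt y).
Proof. rewrite dH_def. apply ch_arcosh, mink_ge1. Qed.

Lemma dH_nonneg n (x y : Hpt n) : 0 <= dH n x y.
Proof. rewrite dH_def. apply arcosh_nonneg, mink_ge1. Qed.

Lemma dH_sym n (x y : Hpt n) : dH n x y = dH n y x.
Proof. rewrite !dH_def, mink_sym. reflexivity. Qed.

Lemma dH_refl n (x : Hpt n) : dH n x x = 0.
Proof.
  rewrite dH_def, pt_norm. replace (- -1) with (ch 0) by (unfold ch; rewrite Ropp_0, exp_0; lra).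
  apply arcosh_ch; lra.
Qed.

Lemma sh_sq t : (sh t)^2 = (ch t)^2 - 1.
Proof. pose proof (ch_sh t); lra. Qed.

Lemma dH_tri n (x y z : Hpt n) : dH n x z <= dH n x y + dH n y z.
Proof.
  set (d1 := dH n x y); set (d2 := dH n y z); set (d3 := dH n x z).
  assert (C1: ch d1 = - mink n (pt x) (pt y)) by apply ch_dH.
  assert (C2: ch d2 = - mink n (pt y) (pt z)) by apply ch_dH.
  assert (C3: ch d3 = - mink n (pt x) (pt z)) by apply ch_dH.
  assert (M1: mink n (pt x) (pt y) = - ch d1) by lra.
  assert (M2: mink n (pt y) (pt z) = - ch d2) by lra.
  assert (M3: mink n (pt x) (pt z) = - ch d3) by lra.
  set (u := fun i => 1 * pt x i + (- ch d1) * pt y i).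
  set (w := fun i => 1 * pt z i + (- ch d2) * pt y i).
  assert (Hu: mink n u (pt y) = 0) by (unfold u; rewrite mink_lin, pt_norm; lra).
  assert (Hw: mink n w (pt y) = 0) by (unfold w; rewrite mink_lin, pt_norm, (mink_sym n (pt z)); lra).
  pose proof (CSperp n y u w Hu Hw) as CS.
  assert (Euu: mink n u u = (ch d1)^2 - 1).
  { unfold u at 1. rewrite mink_lin, (mink_sym n (pt x) u), (mink_sym n (pt y) u). unfold u. rewrite !mink_lin, !pt_norm.
    rewrite (mink_sym n (pt y) (pt x)), M1. ring. }
  assert (Eww: mink n w w = (ch d2)^2 - 1).
  { unfold w at 1. rewrite mink_lin, (mink_sym n (pt z) w), (mink_sym n (pt y) w). unfold w. rewrite !mink_lin, !pt_norm.
    rewrite (mink_sym n (pt z) (pt y)), M2. ring. }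
  assert (Euw: mink n u w = ch d1 * ch d2 - ch d3).
  { unfold u at 1. rewrite mink_lin, (mink_sym n (pt x) w), (mink_sym n (pt y) w). unfold w. rewrite !mink_lin, !pt_norm.
    rewrite (mink_sym n (pt z) (pt x)), (mink_sym n (pt z) (pt y)), (mink_sym n (pt y) (pt x)), M1, M2, M3. ring. }
  rewrite Euu, Eww, Euw, <- !sh_sq in CS.
  assert (0 <= d1) by apply dH_nonneg. assert (0 <= d2) by apply dH_nonneg. assert (0 <= d3) by apply dH_nonneg.
  assert (0 <= sh d1) by (apply sh_nonneg; auto). assert (0 <= sh d2) by (apply sh_nonneg; auto).
  assert (ch d1 * ch d2 - ch d3 >= - (sh d1 * sh d2)).
  { set (X := ch d1 * ch d2 - ch d3) in *. set (P := sh d1 * sh d2).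
    assert (0 <= P) by (unfold P; apply Rmult_le_pos; auto).
    assert (X^2 <= P^2) by (unfold P; rewrite Rpow_mult_distr; exact CS).
    destruct (Rle_lt_dec 0 X); [lra|]. nra. }
  apply ch_le_inv; [auto|lra|]. rewrite ch_plus. lra.
Qed.

Lemma mink_lin3 n a b c x y z w : mink n (fun i => a * x i + b * y i + c * z i) w = a * mink n x w + b * mink n y w + c * mink n z w.
Proof.
  rewrite (mink_ext n _ (fun i => 1 * (fun j => a * x j + b * y j) i + c * z i)) by (intros; simpl; ring).
  rewrite mink_lin, mink_lin. ring.
Qed.

Lemma REP n (x y a : Hpt n) : dH n x a + dH n a y = dH n x y -> forall z,
  sh (dH n x y) * mink n (pt a) z = sh (dH n a y) * mink n (pt x) z + sh (dH n x a) * mink n (pt y) z.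
Proof.
  intros Hb z.
  set (t := dH n x a) in *; set (s := dH n a y) in *; set (d := dH n x y) in *.
  assert (Ma: mink n (pt x) (pt a) = - ch t) by (unfold t; rewrite ch_dH; ring).
  assert (Mb: mink n (pt a) (pt y) = - ch s) by (unfold s; rewrite ch_dH; ring).
  assert (Mc: mink n (pt x) (pt y) = - ch d) by (unfold d; rewrite ch_dH; ring).
  assert (Hd: d = s + t) by lra.
  set (w := fun i => sh d * pt a i + (- sh s) * pt x i + (- sh t) * pt y i).
  assert (Wx: mink n w (pt x) = 0).
  { unfold w. rewrite mink_lin3, !pt_norm, (mink_sym n (pt a)), (mink_sym n (pt y)), Ma, Mc.
    rewrite Hd. pose proof (I1 s t) as I. rewrite <- I. ring. }
  assert (Ww: mink n w w = 0).
  { unfold w at 1. rewrite mink_lin3, (mink_sym n (pt a) w), (mink_sym n (pt x) w), (mink_sym n (pt y) w).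
    unfold w. rewrite !mink_lin3, !pt_norm.
    rewrite (mink_sym n (pt a) (pt x)), (mink_sym n (pt y) (pt a)), (mink_sym n (pt y) (pt x)), Ma, Mb, Mc.
    pose proof (I_ww s t) as I. rewrite <- Hd in I. lra. }
  pose proof (NO n x w Wx Ww z) as H0. unfold w in H0. rewrite mink_lin3 in H0. lra.
Qed.

Lemma between_zero n (x y z : Hpt n) : dH n x z + dH n z y = dH n x y -> dH n x y = 0 -> dH n x z = 0.
Proof. intros. pose proof (dH_nonneg n x z); pose proof (dH_nonneg n z y). lra. Qed.

Lemma COL n (x y z w : Hpt n) : dH n x z + dH n z y = dH n x y -> dH n x w + dH n w y = dH n x y ->
  dH n z w = Rabs (dH n x z - dH n x w).
Proof.
  intros Hz Hw.
  set (d := dH n x y) in *. set (tz := dH n x z) in *. set (tw := dH n x w) in *.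
  assert (0 <= d) by apply dH_nonneg.
  destruct (Req_dec d 0) as [E|E].
  - assert (tz = 0) by (unfold tz; apply (between_zero n x y z); auto).
    assert (tw = 0) by (unfold tw; apply (between_zero n x y w); auto).
    assert (dH n z w <= 0). { pose proof (dH_tri n z x w). rewrite (dH_sym n z x) in H2. fold tz tw in H2. lra. }
    pose proof (dH_nonneg n z w). rewrite H0, H1, Rminus_0_r, Rabs_R0. lra.
  - assert (Hsd: 0 < sh d) by (apply sh_pos; lra).
    assert (Ezy: dH n z y = d - tz) by lra. assert (Ewy: dH n w y = d - tw) by lra.
    pose proof (REP n x y z Hz (pt w)) as R1. fold d in R1. rewrite Ezy in R1. fold tz in R1.
    pose proof (REP n x y w Hw (pt x)) as R2. fold d in R2. rewrite Ewy in R2. fold tw in R2.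
    pose proof (REP n x y w Hw (pt y)) as R3. fold d in R3. rewrite Ewy in R3. fold tw in R3.
    rewrite pt_norm in R2, R3.
    assert (Mc: mink n (pt x) (pt y) = - ch d) by (unfold d; rewrite ch_dH; ring).
    rewrite (mink_sym n (pt y) (pt x)), Mc in R2. rewrite Mc in R3.
    rewrite (mink_sym n (pt w) (pt x)) in R2. rewrite (mink_sym n (pt w) (pt y)) in R3.
    pose proof (I_col d tz tw) as I.
    assert (Hm: mink n (pt z) (pt w) = - ch (tz - tw)).
    { apply (Rmult_eq_reg_l ((sh d)^2)); [|nra].
      replace ((sh d)^2 * mink n (pt z) (pt w)) with (sh d * (sh d * mink n (pt z) (pt w))) by ring.
      rewrite R1. rewrite Rmult_plus_distr_l.
      replace (sh d * (sh (d - tz) * mink n (pt x) (pt w))) with (sh (d - tz) * (sh d * mink n (pt x) (pt w))) by ring.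
      replace (sh d * (sh tz * mink n (pt y) (pt w))) with (sh tz * (sh d * mink n (pt y) (pt w))) by ring.
      rewrite R2, R3. replace (sh d ^ 2 * - ch (tz - tw)) with (- (sh d ^ 2 * ch (tz - tw))) by ring. rewrite I. ring. }
    rewrite dH_def, Hm, Ropp_involutive, <- ch_abs. apply arcosh_ch, Rabs_pos.
Qed.

Lemma I_norm d t : (sh (d-t))^2 + (sh t)^2 + 2 * sh (d-t) * sh t * ch d = (sh d)^2.
Proof. hexp. Qed.
Lemma I_c1 d t : sh (d-t) + sh t * ch d = sh d * ch t.
Proof. hexp. Qed.
Lemma I_c2 d t : sh (d-t) * ch d + sh t = sh d * ch (d - t).
Proof. hexp. Qed.

Lemma CONS n (x y : Hpt n) t : 0 <= t -> t <= dH n x y ->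
  exists z : Hpt n, dH n x z + dH n z y = dH n x y /\ dH n x z = t.
Proof.
  intros Ht1 Ht2. set (d := dH n x y) in *.
  destruct (Req_dec d 0) as [E|E].
  - exists x. rewrite dH_refl. fold d. split; [lra|lra].
  - assert (Hsd: 0 < sh d) by (apply sh_pos; unfold d in *; pose proof (dH_nonneg n x y); lra).
    set (al := sh (d - t) / sh d). set (be := sh t / sh d).
    set (zf := fun i => al * pt x i + be * pt y i).
    assert (Mc: mink n (pt x) (pt y) = - ch d) by (unfold d; rewrite ch_dH; ring).
    assert (Ha: 0 <= al) by (unfold al; unfold Rdiv; apply Rmult_le_pos; [apply sh_nonneg; lra|left; apply Rinv_0_lt_compat; lra]).
    assert (Hb: 0 <= be) by (unfold be; unfold Rdiv; apply Rmult_le_pos; [apply sh_nonneg; lra|left; apply Rinv_0_lt_compat; lra]).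
    assert (Hal: al * sh d = sh (d - t)) by (unfold al; field; lra).
    assert (Hbe: be * sh d = sh t) by (unfold be; field; lra).
    assert (H1: mink n zf zf = -1).
    { unfold zf at 1. rewrite mink_lin, (mink_sym n (pt x) zf), (mink_sym n (pt y) zf). unfold zf.
      rewrite !mink_lin, !pt_norm, (mink_sym n (pt y) (pt x)), Mc.
      pose proof (I_norm d t) as I.
      apply (Rmult_eq_reg_l ((sh d)^2)); [|nra].
      replace (sh d ^ 2 * (al * (al * -1 + be * - ch d) + be * (al * - ch d + be * -1))) with
        (-((al*sh d)^2 + 2*(al*sh d)*(be*sh d)*ch d + (be*sh d)^2)) by ring.
      rewrite Hal, Hbe. rewrite <- I. ring. }
    assert (H2: 0 < zf 0%nat).
    { unfold zf. pose proof (pt_pos n x); pose proof (pt_pos n y).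
      destruct (Req_dec t 0) as [T|T].
      - assert (0 < al) by (unfold al; rewrite T, Rminus_0_r; apply Rdiv_lt_0_compat; lra). nra.
      - assert (0 < be) by (unfold be; apply Rdiv_lt_0_compat; [apply sh_pos|]; lra). nra. }
    assert (H3: forall i, (n < i)%nat -> zf i = 0).
    { intros i Hi. unfold zf. rewrite !pt_zero by auto. ring. }
    set (z := exist (fun x => mink n x x = -1 /\ 0 < x 0%nat /\ (forall i, (n < i)%nat -> x i = 0)) zf (conj H1 (conj H2 H3)) : Hpt n).
    assert (Pz: pt z = zf) by reflexivity.
    assert (D1: dH n x z = t).
    { rewrite dH_def, Pz, mink_sym. unfold zf. rewrite mink_lin, pt_norm, (mink_sym n (pt y) (pt x)), Mc.
      replace (- (al * -1 + be * - ch d)) with (ch t). apply arcosh_ch; lra.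
      pose proof (I_c1 d t) as I. apply (Rmult_eq_reg_l (sh d)); [|lra].
      replace (sh d * - (al * -1 + be * - ch d)) with (al * sh d + be * sh d * ch d) by ring.
      rewrite Hal, Hbe, <- I. ring. }
    assert (D2: dH n z y = d - t).
    { rewrite dH_def, Pz. unfold zf. rewrite mink_lin, pt_norm, Mc.
      replace (- (al * - ch d + be * -1)) with (ch (d - t)). apply arcosh_ch; lra.
      pose proof (I_c2 d t) as I. apply (Rmult_eq_reg_l (sh d)); [|lra].
      replace (sh d * - (al * - ch d + be * -1)) with (al * sh d * ch d + be * sh d) by ring.
      rewrite Hal, Hbe, <- I. ring. }
    exists z. split; lra.
Qed.

Lemma keyineq P ip a ia w : P*ip = 1 -> a*ia = 1 -> 1 <= P -> 1 <= a -> 2 <= w -> w <= P + ip ->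
  0 <= 2*(P+ip) - (a*ip + P*ia) + w*(a + ia - 3).
Proof.
  intros H1 H2 H3 H4 H5 H6.
  assert (0 < ip) by nra. assert (0 < ia) by nra. assert (ip <= 1) by nra. assert (ia <= 1) by nra.
  destruct (Rle_lt_dec 0 (a + ia - 3)) as [C|C].
  - assert (w*(a + ia - 3) >= 2*(a+ia-3)) by nra.
    assert (0 <= 2*(P+ip) - (a*ip + P*ia) + 2*(a + ia - 3)).
    { assert (E: 2*(P+ip) - (a*ip + P*ia) + 2*(a + ia - 3) = (a + ia - 2) + (P-1)*(2 - ia - 2*ip + a*ip)).
      { assert (ip - 1 = -(P-1)*ip) by nra. nra. }
      rewrite E. assert (0 <= a + ia - 2) by lra.
      assert (0 <= 2 - ia - 2*ip + a*ip) by nra. nra. }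
    lra.
  - assert (w*(a + ia - 3) >= (P+ip)*(a+ia-3)) by nra.
    assert (0 <= 2*(P+ip) - (a*ip + P*ia) + (P+ip)*(a + ia - 3)).
    { replace (2*(P+ip) - (a*ip + P*ia) + (P+ip)*(a + ia - 3)) with ((a - 1) * (P - ia * ip)) by
        (replace (P * ia * 1) with (P*ia) by ring; nra).
      apply Rmult_le_pos; nra. }
    lra.
Qed.

Definition Gins u v t := sh u * sh v + sh u * sh t * ch (v + t) + sh t * sh v * ch (u + t) + (sh t)^2 * ch (u + v).

Lemma Gins_id u v t : 8 * (3/2 * (sh (u+t) * sh (v+t)) - Gins u v t) =
  2*(exp (u+v) + exp (-(u+v))) - (exp (t+t) * exp (-(u+v)) + exp (u+v) * exp (-(t+t)))
  + (exp (u - v) + exp (v - u)) * (exp (t+t) + exp (-(t+t)) - 3).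
Proof. unfold Gins. hexp. Qed.

Lemma insize_alg u v t : 0 <= u -> 0 <= v -> 0 <= t -> Gins u v t <= 5/3 * (sh (u+t) * sh (v+t)).
Proof.
  intros Hu Hv Ht.
  pose proof (Gins_id u v t) as E.
  assert (0 <= sh (u+t) * sh (v+t)) by (apply Rmult_le_pos; apply sh_nonneg; lra).
  set (P := exp (u+v)) in *. set (ip := exp (-(u+v))) in *.
  set (a := exp (t+t)) in *. set (ia := exp (-(t+t))) in *.
  assert (H1: P * ip = 1) by (unfold P, ip; rewrite <- exp_plus; replace (u + v + - (u + v)) with 0 by ring; apply exp_0).
  assert (H2: a * ia = 1) by (unfold a, ia; rewrite <- exp_plus; replace (t + t + - (t + t)) with 0 by ring; apply exp_0).
  assert (H3: 1 <= P) by (unfold P; rewrite <- exp_0; destruct (Req_dec (u+v) 0) as [Z|Z]; [rewrite Z; lra|left; apply exp_increasing; lra]).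
  assert (H4: 1 <= a) by (unfold a; rewrite <- exp_0; destruct (Req_dec (t+t) 0) as [Z|Z]; [rewrite Z; lra|left; apply exp_increasing; lra]).
  set (Q := exp (u - v)) in *. set (iQ := exp (v - u)) in *.
  assert (HQ: Q * iQ = 1) by (unfold Q, iQ; rewrite <- exp_plus; replace (u - v + (v - u)) with 0 by ring; apply exp_0).
  assert (0 < Q) by apply exp_pos. assert (0 < iQ) by apply exp_pos.
  assert (K5: 2 <= Q + iQ) by (assert (0 <= (Q-1)^2 * iQ) by (apply Rmult_le_pos; [apply pow2_ge_0|lra]); nra).
  assert (HPQ: Q <= P) by (unfold Q, P; destruct (Req_dec v 0) as [Z|Z]; [subst; right; f_equal; ring|left; apply exp_increasing; lra]).
  assert (HPQ2: iQ <= P) by (unfold iQ, P; destruct (Req_dec u 0) as [Z|Z]; [subst; right; f_equal; ring|left; apply exp_increasing; lra]).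
  assert (H6: Q + iQ <= P + ip).
  { assert (0 < ip) by apply exp_pos.
    assert (Q + iQ - P - ip = (Q - P) * (1 - iQ * ip)).
    { assert (iQ = iQ * (P * ip)) by (rewrite H1; ring). assert (ip = ip * (Q * iQ)) by (rewrite HQ; ring). nra. }
    assert (iQ * ip <= 1) by nra. nra. }
  pose proof (keyineq P ip a ia (Q + iQ) H1 H2 H3 H4 K5 H6). lra.
Qed.

Lemma ch_ln3 : ch (ln 3) = 5/3.
Proof. unfold ch. rewrite exp_Ropp, exp_ln by lra. field. Qed.

Lemma ln3_pos : 0 < ln 3.
Proof. rewrite <- ln_1. apply ln_increasing; lra. Qed.

Lemma INS n (x1 x2 x3 z w : Hpt n) t :
  dH n x1 z + dH n z x2 = dH n x1 x2 -> dH n x1 w + dH n w x3 = dH n x1 x3 ->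
  dH n x1 z = t -> dH n x1 w = t -> 2 * t <= dH n x1 x2 + dH n x1 x3 - dH n x2 x3 ->
  dH n z w <= ln 3.
Proof.
  intros Bz Bw Tz Tw Ht.
  set (p := dH n x1 x2) in *. set (q := dH n x1 x3) in *. set (e := dH n x2 x3) in *.
  pose proof (dH_nonneg n z x2). pose proof (dH_nonneg n w x3). pose proof (dH_nonneg n x1 z).
  pose proof ln3_pos.
  assert (Hpe: t <= p) by lra. assert (Hqe: t <= q) by lra. assert (0 <= t) by lra.
  destruct (Req_dec t 0) as [T0|T0].
  - pose proof (dH_tri n z x1 w) as Tr. rewrite (dH_sym n z x1) in Tr. lra.
  - assert (Hsp: 0 < sh p) by (apply sh_pos; lra). assert (Hsq: 0 < sh q) by (apply sh_pos; lra).
    assert (Ezy: dH n z x2 = p - t) by lra. assert (Ewy: dH n w x3 = q - t) by lra.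
    pose proof (REP n x1 x2 z Bz (pt w)) as R1. fold p in R1. rewrite Ezy, Tz in R1.
    pose proof (REP n x1 x3 w Bw (pt x1)) as R2. fold q in R2. rewrite Ewy, Tw in R2.
    pose proof (REP n x1 x3 w Bw (pt x2)) as R3. fold q in R3. rewrite Ewy, Tw in R3.
    rewrite pt_norm in R2.
    assert (M12: mink n (pt x1) (pt x2) = - ch p) by (unfold p; rewrite ch_dH; ring).
    assert (M13: mink n (pt x1) (pt x3) = - ch q) by (unfold q; rewrite ch_dH; ring).
    assert (M23: mink n (pt x2) (pt x3) = - ch e) by (unfold e; rewrite ch_dH; ring).
    rewrite (mink_sym n (pt x3) (pt x1)), M13 in R2. rewrite M12, (mink_sym n (pt x3) (pt x2)), M23 in R3.
    rewrite (mink_sym n (pt w) (pt x1)) in R2. rewrite (mink_sym n (pt w) (pt x2)) in R3.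
    set (u := p - t) in *. set (v := q - t) in *.
    assert (Ep: p = u + t) by (unfold u; ring). assert (Eq: q = v + t) by (unfold v; ring).
    assert (He: e <= u + v) by (unfold u, v; lra).
    assert (0 <= e) by apply dH_nonneg.
    assert (Che: ch e <= ch (u + v)) by (apply ch_le; lra).
    assert (Hm: sh p * sh q * (- mink n (pt z) (pt w)) = sh u * sh v + sh u * sh t * ch q + sh t * sh v * ch p + (sh t)^2 * ch e).
    { replace (sh p * sh q * (- mink n (pt z) (pt w))) with (- (sh q * (sh p * mink n (pt z) (pt w)))) by ring.
      rewrite R1. 
      replace (- (sh q * (sh u * mink n (pt x1) (pt w) + sh t * mink n (pt x2) (pt w)))) with
        (- (sh u * (sh q * mink n (pt x1) (pt w)) + sh t * (sh q * mink n (pt x2) (pt w)))) by ring.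
      rewrite R2, R3. ring. }
    assert (0 <= (sh t)^2) by apply pow2_ge_0.
    assert (Hg: sh p * sh q * (- mink n (pt z) (pt w)) <= Gins u v t).
    { rewrite Hm. unfold Gins. rewrite <- Ep, <- Eq.
      assert ((sh t)^2 * ch e <= (sh t)^2 * ch (u+v)) by (apply Rmult_le_compat_l; auto). lra. }
    pose proof (insize_alg u v t) as Ia. rewrite <- Ep, <- Eq in Ia.
    assert (0 <= u) by (unfold u; lra). assert (0 <= v) by (unfold v; lra).
    specialize (Ia ltac:(lra) ltac:(lra) ltac:(lra)).
    assert (Hc: - mink n (pt z) (pt w) <= 5/3).
    { assert (0 < sh p * sh q) by nra. 
      apply (Rmult_le_reg_l (sh p * sh q)); [auto|]. lra. }
    apply ch_le_inv; [apply dH_nonneg|lra|]. rewrite ch_dH, ch_ln3. auto.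
Qed.

Definition gH n (a b c : Hpt n) := (dH n a b + dH n a c - dH n b c) / 2.

Definition hleg n (xa xb xc z : Hpt n) (h : R) :=
  (between (dH n) xa z xb \/ between (dH n) xa z xc) /\ 0 <= h /\ h <= gH n xa xb xc /\
  dH n xa z = gH n xa xb xc - h.

Lemma gH_swap n a b c : gH n a b c = gH n a c b.
Proof. unfold gH. rewrite (dH_sym n b c). lra. Qed.

Lemma gH_bounds n a b c : 0 <= gH n a b c <= dH n a b.
Proof.
  unfold gH. pose proof (dH_tri n b a c). pose proof (dH_tri n a b c). rewrite (dH_sym n b a) in H. lra.
Qed.

Lemma hleg_swap n a b c z h : hleg n a b c z h -> hleg n a c b z h.
Proof. unfold hleg. rewrite gH_swap. intros [[B|B] R]; auto. Qed.

Lemma NEAR n (xa xb xc z z' : Hpt n) t : (between (dH n) xa z xb \/ between (dH n) xa z xc) ->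
  dH n xa z = t -> t <= gH n xa xb xc -> between (dH n) xa z' xb -> dH n xa z' = t -> dH n z z' <= ln 3.
Proof.
  unfold between. intros [B|B] T1 Tg B' T2.
  - rewrite (COL n xa xb z z' B B'), T1, T2, Rminus_diag, Rabs_R0. left; apply ln3_pos.
  - apply (INS n xa xc xb z z' t B B' T1 T2). unfold gH in Tg. rewrite (dH_sym n xc xb). lra.
Qed.

Lemma HS n (xa xb xc z w : Hpt n) h h' : hleg n xa xb xc z h -> hleg n xa xb xc w h' ->
  dH n z w <= Rabs (h - h') + 2 * ln 3 /\ Rabs (h - h') <= dH n z w + 2 * ln 3.
Proof.
  intros [Bz [Hz1 [Hz2 Hz3]]] [Bw [Hw1 [Hw2 Hw3]]].
  pose proof (gH_bounds n xa xb xc) as G.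
  destruct (CONS n xa xb (gH n xa xb xc - h) ltac:(lra) ltac:(lra)) as [z' [Bz' Tz']].
  destruct (CONS n xa xb (gH n xa xb xc - h') ltac:(lra) ltac:(lra)) as [w' [Bw' Tw']].
  assert (N1: dH n z z' <= ln 3) by (apply (NEAR n xa xb xc z z' (gH n xa xb xc - h)); auto; lra).
  assert (N2: dH n w w' <= ln 3) by (apply (NEAR n xa xb xc w w' (gH n xa xb xc - h')); auto; lra).
  assert (Cl: dH n z' w' = Rabs (h - h')).
  { rewrite (COL n xa xb z' w' Bz' Bw'), Tz', Tw'. rewrite Rabs_minus_sym. f_equal. ring. }
  pose proof (dH_tri n z z' w). pose proof (dH_tri n z' w' w). pose proof (dH_tri n z' z w').
  pose proof (dH_tri n z w w'). rewrite (dH_sym n w' w) in H0. rewrite (dH_sym n z' z) in H1.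
  split; lra.
Qed.

Lemma HD n (xa xb xc z w : Hpt n) h h' : hleg n xa xb xc z h -> hleg n xb xa xc w h' ->
  dH n z w <= h + h' + 2 * ln 3 /\ h + h' <= dH n z w + 2 * ln 3.
Proof.
  intros [Bz [Hz1 [Hz2 Hz3]]] [Bw [Hw1 [Hw2 Hw3]]].
  pose proof (gH_bounds n xa xb xc) as G. pose proof (gH_bounds n xb xa xc) as G'.
  assert (Gs: gH n xa xb xc + gH n xb xa xc = dH n xa xb).
  { unfold gH. rewrite (dH_sym n xb xa). lra. }
  rewrite (dH_sym n xb xa) in G'.
  destruct (CONS n xa xb (gH n xa xb xc - h) ltac:(lra) ltac:(lra)) as [z' [Bz' Tz']].
  destruct (CONS n xb xa (gH n xb xa xc - h') ltac:(lra) ltac:(rewrite (dH_sym n xb xa); lra)) as [w' [Bw' Tw']].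
  assert (N1: dH n z z' <= ln 3) by (apply (NEAR n xa xb xc z z' (gH n xa xb xc - h)); auto; lra).
  assert (N2: dH n w w' <= ln 3) by (apply (NEAR n xb xa xc w w' (gH n xb xa xc - h')); auto; lra).
  assert (Bw'': between (dH n) xa w' xb).
  { unfold between in *. rewrite (dH_sym n xa w'), (dH_sym n w' xb), (dH_sym n xa xb). lra. }
  assert (Tw'': dH n xa w' = dH n xa xb - (gH n xb xa xc - h')).
  { unfold between in Bw'. rewrite (dH_sym n xb xa), (dH_sym n w' xa) in Bw'. lra. }
  assert (Cl: dH n z' w' = h + h').
  { rewrite (COL n xa xb z' w' Bz' Bw''), Tz', Tw''. replace (gH n xa xb xc - h - (dH n xa xb - (gH n xb xa xc - h'))) with (- (h + h')) by lra.
    rewrite Rabs_Ropp. apply Rabs_right. lra. }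
  pose proof (dH_tri n z z' w). pose proof (dH_tri n z' w' w). pose proof (dH_tri n z' z w').
  pose proof (dH_tri n z w w'). rewrite (dH_sym n w' w) in H0. rewrite (dH_sym n z' z) in H1.
  split; lra.
Qed.

Section Tree.
Context {T : Type} (dT : T -> T -> R) (Hm : is_metric dT) (Hz : zero_hyperbolic dT).

Lemma dT_sym a b : dT a b = dT b a.
Proof. destruct Hm as [_ [_ [H _]]]. apply H. Qed.
Lemma dT_tri a b c : dT a c <= dT a b + dT b c.
Proof. destruct Hm as [_ [_ [_ H]]]. apply H. Qed.
Lemma dT_nonneg a b : 0 <= dT a b.
Proof. destruct Hm as [H _]. apply H. Qed.
Lemma dT_refl a : dT a a = 0.
Proof. destruct Hm as [_ [H _]]. apply H. auto. Qed.

Lemma bet_sym a y b : between dT a y b -> between dT b y a.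
Proof. unfold between. rewrite (dT_sym b y), (dT_sym y a), (dT_sym b a). lra. Qed.

Lemma TCOL a b y y' : between dT a y b -> between dT a y' b -> dT y y' = Rabs (dT a y - dT a y').
Proof.
  unfold between. intros B1 B2.
  pose proof (Hz a b y y') as F. rewrite (dT_sym b y'), (dT_sym b y) in F.
  assert (U: dT y y' <= Rabs (dT a y - dT a y')).
  { unfold Rmax in F. destruct (Rle_dec _ _); unfold Rabs; destruct (Rcase_abs _); lra. }
  pose proof (dT_tri a y y'). pose proof (dT_tri a y' y). rewrite (dT_sym y' y) in H0.
  apply Rle_antisym; auto. unfold Rabs; destruct (Rcase_abs _); lra.
Qed.

Definition tleg (o P y : T) (k : R) := between dT P y o /\ dT y o = k.

Lemma TS o P y y' k k' : tleg o P y k -> tleg o P y' k' -> dT y y' = Rabs (k - k').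
Proof.
  intros [B1 K1] [B2 K2]. rewrite (TCOL P o y y' B1 B2). unfold between in *.
  replace (dT P y - dT P y') with (- (k - k')) by lra. apply Rabs_Ropp.
Qed.

Lemma bet_ext a y o b : between dT a o b -> between dT a y o -> between dT a y b.
Proof.
  unfold between. intros B1 B2. pose proof (dT_tri y o b). pose proof (dT_tri a y b). lra.
Qed.

Lemma TD o Pa Pb y y' k k' : between dT Pa o Pb -> tleg o Pa y k -> tleg o Pb y' k' -> dT y y' = k + k'.
Proof.
  intros Bo [B1 K1] [B2 K2].
  assert (Y1: between dT Pa y Pb) by (apply (bet_ext Pa y o Pb); auto).
  assert (Y2: between dT Pa y' Pb).
  { apply bet_sym. apply (bet_ext Pb y' o Pa); [apply bet_sym; auto|auto]. }
  rewrite (TCOL Pa Pb y y' Y1 Y2). unfold between in *.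
  pose proof (dT_nonneg y o). pose proof (dT_nonneg y' o).
  rewrite (dT_sym o Pb) in Bo. rewrite (dT_sym y' Pb) in Y2.
  replace (dT Pa y - dT Pa y') with (- (k + k')) by lra. rewrite Rabs_Ropp. apply Rabs_right. lra.
Qed.

Lemma tsplit o Pa Pb y : between dT Pa o Pb -> between dT Pa y Pb -> between dT Pa y o \/ between dT Pb y o.
Proof.
  intros Bo By. pose proof (TCOL Pa Pb y o By Bo) as C. unfold between in *.
  destruct (Rle_dec (dT Pa y) (dT Pa o)).
  - left. rewrite C. unfold Rabs; destruct (Rcase_abs _); lra.
  - right. rewrite C. rewrite (dT_sym Pb y), (dT_sym Pb o). unfold Rabs; destruct (Rcase_abs _); lra.
Qed.

End Tree.

Lemma abs_diff h k h' k' E : Rabs (h - k) <= E -> Rabs (h' - k') <= E ->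
  Rabs (h - h') <= Rabs (k - k') + 2 * E /\ Rabs (k - k') <= Rabs (h - h') + 2 * E.
Proof.
  intros A B. revert A B. unfold Rabs; repeat destruct (Rcase_abs _); intros; split; lra.
Qed.

Lemma abs_sum h k h' k' E : Rabs (h - k) <= E -> Rabs (h' - k') <= E ->
  h + h' <= k + k' + 2 * E /\ k + k' <= h + h' + 2 * E.
Proof.
  intros A B. revert A B. unfold Rabs; repeat destruct (Rcase_abs _); intros; split; lra.
Qed.

Definition Prof n {T} (dT : T -> T -> R) (x1 x2 x3 : Hpt n) (P1 P2 P3 o : T) E z y :=
 (exists h k, hleg n x1 x2 x3 z h /\ tleg dT o P1 y k /\ Rabs (h - k) <= E) \/
 (exists h k, hleg n x2 x1 x3 z h /\ tleg dT o P2 y k /\ Rabs (h - k) <= E) \/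
 (exists h k, hleg n x3 x1 x2 z h /\ tleg dT o P3 y k /\ Rabs (h - k) <= E).

Lemma core n {T} (dT : T -> T -> R) (x1 x2 x3 : Hpt n) (P1 P2 P3 o : T) E :
  is_metric dT -> zero_hyperbolic dT ->
  between dT P1 o P2 -> between dT P1 o P3 -> between dT P2 o P3 ->
  forall z y z' y', Prof n dT x1 x2 x3 P1 P2 P3 o E z y -> Prof n dT x1 x2 x3 P1 P2 P3 o E z' y' ->
  dH n z z' <= dT y y' + 2 * E + 2 * ln 3 /\ dT y y' <= dH n z z' + 2 * E + 2 * ln 3.
Proof.
  intros Hm Hz B12 B13 B23 z y z' y' Pz Pz'.
  assert (B21 := bet_sym dT Hm _ _ _ B12). assert (B31 := bet_sym dT Hm _ _ _ B13).
  assert (B32 := bet_sym dT Hm _ _ _ B23).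
  destruct Pz as [[h [k [L1 [T1 A1]]]]|[[h [k [L1 [T1 A1]]]]|[h [k [L1 [T1 A1]]]]]];
  destruct Pz' as [[h' [k' [L2 [T2 A2]]]]|[[h' [k' [L2 [T2 A2]]]]|[h' [k' [L2 [T2 A2]]]]]];
  first
    [ (* same leg *)
      rewrite (TS dT Hm Hz _ _ _ _ _ _ T1 T2);
      destruct (HS _ _ _ _ _ _ _ _ L1 L2); destruct (abs_diff _ _ _ _ _ A1 A2); split; lra
    | idtac ].
  - rewrite (TD dT Hm Hz _ _ _ _ _ _ _ B12 T1 T2). destruct (HD _ _ _ _ _ _ _ _ L1 L2).
    destruct (abs_sum _ _ _ _ _ A1 A2); split; lra.
  - rewrite (TD dT Hm Hz _ _ _ _ _ _ _ B13 T1 T2). destruct (HD _ _ _ _ _ _ _ _ (hleg_swap _ _ _ _ _ _ L1) L2).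
    destruct (abs_sum _ _ _ _ _ A1 A2); split; lra.
  - rewrite (TD dT Hm Hz _ _ _ _ _ _ _ B21 T1 T2). destruct (HD _ _ _ _ _ _ _ _ L1 L2).
    destruct (abs_sum _ _ _ _ _ A1 A2); split; lra.
  - rewrite (TD dT Hm Hz _ _ _ _ _ _ _ B23 T1 T2). destruct (HD _ _ _ _ _ _ _ _ (hleg_swap _ _ _ _ _ _ L1) (hleg_swap _ _ _ _ _ _ L2)).
    destruct (abs_sum _ _ _ _ _ A1 A2); split; lra.
  - rewrite (TD dT Hm Hz _ _ _ _ _ _ _ B31 T1 T2). destruct (HD _ _ _ _ _ _ _ _ L1 (hleg_swap _ _ _ _ _ _ L2)).
    destruct (abs_sum _ _ _ _ _ A1 A2); split; lra.
  - rewrite (TD dT Hm Hz _ _ _ _ _ _ _ B32 T1 T2). destruct (HD _ _ _ _ _ _ _ _ (hleg_swap _ _ _ _ _ _ L1) (hleg_swap _ _ _ _ _ _ L2)).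
    destruct (abs_sum _ _ _ _ _ A1 A2); split; lra.
Qed.

Lemma fprof n {T} (dT : T -> T -> R) (pD : Hpt n -> T) (xa xm oam z : Hpt n) (Pa o : T) ga E :
  is_metric dT ->
  between (dH n) xa oam xm -> dH n xa oam = ga -> between (dH n) xa z xm -> dH n xa z <= ga ->
  dilation_on (dH n) dT pD xa oam Pa o -> Rabs (dT Pa o - ga) <= E ->
  between dT Pa (pD z) o /\ Rabs ((ga - dH n xa z) - dT (pD z) o) <= E.
Proof.
  intros Hm Bo Go Bz Tz Dil Hr.
  assert (C := COL n xa xm z oam Bz Bo).
  rewrite Go in C.
  assert (Bz' : between (dH n) xa z oam).
  { unfold between. rewrite C, Go. rewrite Rabs_left1 by lra. lra. }
  destruct (Dil z Bz') as [Bt Dt]. rewrite Go in Dt. split; auto.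
  unfold between in Bt.
  set (t := dH n xa z) in *. set (r := dT Pa o) in *.
  assert (0 <= t) by apply dH_nonneg.
  assert (Hk: dT (pD z) o = r - r / ga * t) by lra.
  rewrite Hk.
  destruct (Req_dec ga 0) as [G|G].
  - assert (t = 0) by lra. rewrite H0, Rmult_0_r, G. rewrite G in Hr.
    replace (0 - 0 - (r - 0)) with (- (r - 0)) by ring. rewrite Rabs_Ropp. auto.
  - assert (0 < ga) by (pose proof (dH_nonneg n xa oam); lra).
    replace (ga - t - (r - r / ga * t)) with ((ga - t) / ga * (ga - r)) by (field; lra).
    assert (0 <= (ga - t) / ga) by (unfold Rdiv; apply Rmult_le_pos; [lra|left; apply Rinv_0_lt_compat; lra]).
    rewrite Rabs_mult. rewrite (Rabs_right ((ga - t) / ga)) by lra.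
    rewrite Rabs_minus_sym.
    assert ((ga - t) / ga <= 1).
    { replace ((ga - t) / ga) with (1 - t / ga) by (field; lra).
      assert (0 <= t / ga) by (unfold Rdiv; apply Rmult_le_pos; [lra|left; apply Rinv_0_lt_compat; lra]). lra. }
    pose proof (Rabs_pos (r - ga)). nra.
Qed.

Lemma gprof n (xa xb xc : Hpt n) k ra E : 0 <= k -> k <= ra -> Rabs (ra - gH n xa xb xc) <= E ->
  exists z h, hleg n xa xb xc z h /\ Rabs (h - k) <= E /\ between (dH n) xa z xb.
Proof.
  intros Hk1 Hk2 Hr. set (ga := gH n xa xb xc) in *.
  pose proof (gH_bounds n xa xb xc) as G. fold ga in G.
  set (h := Rmin k ga).
  assert (0 <= h <= ga) by (unfold h; unfold Rmin; destruct (Rle_dec _ _); lra).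
  assert (Rabs (h - k) <= E).
  { unfold h, Rmin. destruct (Rle_dec k ga).
    - rewrite Rminus_diag, Rabs_R0. pose proof (Rabs_pos (ra - ga)). lra.
    - revert Hr. unfold Rabs; repeat destruct (Rcase_abs _); intros; lra. }
  destruct (CONS n xa xb (ga - h) ltac:(lra) ltac:(lra)) as [z [Bz Tz]].
  exists z, h. split; [|split; auto].
  unfold hleg. fold ga. split; [left; auto|]. split; [lra|]. split; lra.
Qed.

Lemma bH_sym n (a y b : Hpt n) : between (dH n) a y b -> between (dH n) b y a.
Proof. unfold between. rewrite (dH_sym n b y), (dH_sym n y a), (dH_sym n b a). lra. Qed.

Lemma halfcase n {T} (dT : T -> T -> R) (pD : Hpt n -> T) (xa xb xc om z : Hpt n) (Pa Pb o : T) E :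
  is_metric dT ->
  between (dH n) xa om xb -> dH n xa om = gH n xa xb xc -> between (dH n) xa z xb -> dH n xa z <= gH n xa xb xc ->
  dilation_on (dH n) dT pD xa om Pa o -> Rabs (dT Pa o - gH n xa xb xc) <= E -> between dT Pa o Pb ->
  (exists h k, hleg n xa xb xc z h /\ tleg dT o Pa (pD z) k /\ Rabs (h - k) <= E) /\ between dT Pa (pD z) Pb.
Proof.
  intros Hm Bo Go Bz Tz Dil Hr Bt.
  destruct (fprof n dT pD xa xb om z Pa o (gH n xa xb xc) E Hm Bo Go Bz Tz Dil Hr) as [B1 A1].
  split.
  - exists (gH n xa xb xc - dH n xa z), (dT (pD z) o). split; [|split; [split; auto|auto]].
    unfold hleg. pose proof (dH_nonneg n xa z). split; [left; auto|]. split; [lra|]. split; lra.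
  - apply (bet_ext dT Hm Pa (pD z) o Pb Bt B1).
Qed.

Theorem mainTheorem6 (n : nat) (c : R) (X : list (Hpt n))
  (T : Type) (dT : T -> T -> R) (V : list T) (p : Hpt n -> T)
  (x1 x2 x3 o12 o13 o23 : Hpt n) (o : T) (pD : Hpt n -> T) :
  0 < c ->
  NoDup X ->
  INR (length X) <= Rpower 2 c + 2 ->
  gromov_approx_tree c (dH n) X dT V p ->
  In x1 X -> In x2 X -> In x3 X ->
  (* internal points of the geodesic triangle *)
  between (dH n) x1 o12 x2 ->
  dH n x1 o12 = (dH n x1 x2 + dH n x1 x3 - dH n x2 x3) / 2 ->
  between (dH n) x1 o13 x3 ->
  dH n x1 o13 = (dH n x1 x3 + dH n x1 x2 - dH n x3 x2) / 2 ->
  between (dH n) x2 o23 x3 ->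
  dH n x2 o23 = (dH n x2 x3 + dH n x2 x1 - dH n x3 x1) / 2 ->
  (* branch point of the tripod *)
  between dT (p x1) o (p x2) ->
  between dT (p x1) o (p x3) ->
  between dT (p x2) o (p x3) ->
  (* the map p_Delta *)
  pD x1 = p x1 -> pD x2 = p x2 -> pD x3 = p x3 ->
  pD o12 = o -> pD o13 = o -> pD o23 = o ->
  dilation_on (dH n) dT pD x1 o12 (p x1) o ->
  dilation_on (dH n) dT pD x2 o12 (p x2) o ->
  dilation_on (dH n) dT pD x1 o13 (p x1) o ->
  dilation_on (dH n) dT pD x3 o13 (p x3) o ->
  dilation_on (dH n) dT pD x2 o23 (p x2) o ->
  dilation_on (dH n) dT pD x3 o23 (p x3) o ->
  quasi_isometry (dH n)
    (fun z => between (dH n) x1 z x2 \/ between (dH n) x1 z x3 \/ between (dH n) x2 z x3)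
    dT
    (fun y => between dT (p x1) y (p x2) \/ between dT (p x1) y (p x3) \/ between dT (p x2) y (p x3))
    pD 1 (4 * c * delta + 2 * delta).
Proof.
  intros Hc _ _ Hg In1 In2 In3 B12o G12 B13o G13 B23o G23 T12 T13 T23 _ _ _ _ _ _
    D1_12 D2_12 D1_13 D3_13 D2_23 D3_23.
  destruct Hg as [[Hm [_ [Hz _]]] [_ [_ Hbd]]].
  assert (Hdl: delta = ln 3) by reflexivity.
  pose proof ln3_pos as Hl.
  set (E := 2 * c * delta).
  assert (HE: 0 <= E) by (unfold E; rewrite Hdl; nra).
  set (P1 := p x1) in *. set (P2 := p x2) in *. set (P3 := p x3) in *.
  assert (s12 := dH_sym n x2 x1). assert (s13 := dH_sym n x3 x1). assert (s23 := dH_sym n x3 x2).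
  assert (t12 := dT_sym dT Hm P2 P1). assert (t13 := dT_sym dT Hm P3 P1). assert (t23 := dT_sym dT Hm P3 P2).
  assert (to1 := dT_sym dT Hm o P1). assert (to2 := dT_sym dT Hm o P2). assert (to3 := dT_sym dT Hm o P3).
  destruct (Hbd x1 x2 In1 In2) as [b12a b12b].
  destruct (Hbd x1 x3 In1 In3) as [b13a b13b].
  destruct (Hbd x2 x3 In2 In3) as [b23a b23b].
  fold P1 P2 P3 in b12a, b12b, b13a, b13b, b23a, b23b.
  assert (R1: Rabs (dT P1 o - gH n x1 x2 x3) <= E).
  { unfold between in *. unfold gH, E in *. unfold Rabs; destruct (Rcase_abs _); lra. }
  assert (R2: Rabs (dT P2 o - gH n x2 x1 x3) <= E).
  { unfold between in *. unfold gH, E in *. unfold Rabs; destruct (Rcase_abs _); lra. }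
  assert (R3: Rabs (dT P3 o - gH n x3 x1 x2) <= E).
  { unfold between in *. unfold gH, E in *. unfold Rabs; destruct (Rcase_abs _); lra. }
  set (PR := Prof n dT x1 x2 x3 P1 P2 P3 o E).
  set (A := fun z => between (dH n) x1 z x2 \/ between (dH n) x1 z x3 \/ between (dH n) x2 z x3).
  set (B := fun y => between dT P1 y P2 \/ between dT P1 y P3 \/ between dT P2 y P3).
  assert (g1 : dH n x1 o12 = gH n x1 x2 x3) by (unfold gH; lra).
  assert (g2 : dH n x2 o12 = gH n x2 x1 x3) by (unfold between in B12o; unfold gH; rewrite (dH_sym n o12 x2) in B12o; lra).
  assert (g3 : dH n x1 o13 = gH n x1 x3 x2) by (unfold gH; lra).
  assert (g4 : dH n x3 o13 = gH n x3 x1 x2) by (unfold between in B13o; unfold gH; rewrite (dH_sym n o13 x3) in B13o; lra).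
  assert (g5 : dH n x2 o23 = gH n x2 x3 x1) by (unfold gH; lra).
  assert (g6 : dH n x3 o23 = gH n x3 x2 x1) by (unfold between in B23o; unfold gH; rewrite (dH_sym n o23 x3) in B23o; lra).
  assert (T21 := bet_sym dT Hm _ _ _ T12). assert (T31 := bet_sym dT Hm _ _ _ T13). assert (T32 := bet_sym dT Hm _ _ _ T23).
  assert (fA : forall a, A a -> PR a (pD a) /\ B (pD a)).
  { intros a [Ha|[Ha|Ha]].
    - destruct (Rle_dec (dH n x1 a) (dH n x1 o12)) as [r|r].
      + destruct (halfcase n dT pD x1 x2 x3 o12 a P1 P2 o E Hm B12o g1 Ha ltac:(lra) D1_12 R1 T12) as [H1 H2].
        split; [left; auto|left; auto].
      + assert (dH n x2 a <= gH n x2 x1 x3) by (unfold between in Ha, B12o; rewrite (dH_sym n a x2) in Ha; rewrite (dH_sym n o12 x2) in B12o; lra).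
        destruct (halfcase n dT pD x2 x1 x3 o12 a P2 P1 o E Hm (bH_sym _ _ _ _ B12o) g2 (bH_sym _ _ _ _ Ha) H D2_12 R2 T21) as [H1 H2].
        split; [right; left; auto|left; apply bet_sym; auto].
    - destruct (Rle_dec (dH n x1 a) (dH n x1 o13)) as [r|r].
      + destruct (halfcase n dT pD x1 x3 x2 o13 a P1 P3 o E Hm B13o g3 Ha ltac:(lra) D1_13 ltac:(rewrite <- gH_swap; auto) T13) as [[h [k [L1 L2]]] H2].
        split; [left; exists h, k; split; [apply hleg_swap; auto|auto]|right; left; auto].
      + assert (dH n x3 a <= gH n x3 x1 x2) by (unfold between in Ha, B13o; rewrite (dH_sym n a x3) in Ha; rewrite (dH_sym n o13 x3) in B13o; lra).
        destruct (halfcase n dT pD x3 x1 x2 o13 a P3 P1 o E Hm (bH_sym _ _ _ _ B13o) g4 (bH_sym _ _ _ _ Ha) H D3_13 R3 T31) as [H1 H2].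
        split; [right; right; auto|right; left; apply bet_sym; auto].
    - destruct (Rle_dec (dH n x2 a) (dH n x2 o23)) as [r|r].
      + destruct (halfcase n dT pD x2 x3 x1 o23 a P2 P3 o E Hm B23o g5 Ha ltac:(lra) D2_23 ltac:(rewrite <- gH_swap; auto) T23) as [[h [k [L1 L2]]] H2].
        split; [right; left; exists h, k; split; [apply hleg_swap; auto|auto]|right; right; auto].
      + assert (dH n x3 a <= gH n x3 x2 x1) by (unfold between in Ha, B23o; rewrite (dH_sym n a x3) in Ha; rewrite (dH_sym n o23 x3) in B23o; lra).
        destruct (halfcase n dT pD x3 x2 x1 o23 a P3 P2 o E Hm (bH_sym _ _ _ _ B23o) g6 (bH_sym _ _ _ _ Ha) H D3_23 ltac:(rewrite <- gH_swap; auto) T32) as [[h [k [L1 L2]]] H2].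
        split; [right; right; exists h, k; split; [apply hleg_swap; auto|auto]|right; right; apply bet_sym; auto]. }
  assert (L1 : forall y, between dT P1 y o -> exists z, A z /\ PR z y).
  { intros y By. assert (K:= By). unfold between in K. pose proof (dT_nonneg dT Hm P1 y). pose proof (dT_nonneg dT Hm y o).
    destruct (gprof n x1 x2 x3 (dT y o) (dT P1 o) E ltac:(lra) ltac:(lra) R1) as [z [h [Hle [Ha Hb]]]].
    exists z. split; [left; auto|left; exists h, (dT y o); split; [auto|split; [split; auto|auto]]]. }
  assert (L2 : forall y, between dT P2 y o -> exists z, A z /\ PR z y).
  { intros y By. assert (K:= By). unfold between in K. pose proof (dT_nonneg dT Hm P2 y). pose proof (dT_nonneg dT Hm y o).
    destruct (gprof n x2 x1 x3 (dT y o) (dT P2 o) E ltac:(lra) ltac:(lra) R2) as [z [h [Hle [Ha Hb]]]].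
    exists z. split; [left; apply bH_sym; auto|right; left; exists h, (dT y o); split; [auto|split; [split; auto|auto]]]. }
  assert (L3 : forall y, between dT P3 y o -> exists z, A z /\ PR z y).
  { intros y By. assert (K:= By). unfold between in K. pose proof (dT_nonneg dT Hm P3 y). pose proof (dT_nonneg dT Hm y o).
    destruct (gprof n x3 x1 x2 (dT y o) (dT P3 o) E ltac:(lra) ltac:(lra) R3) as [z [h [Hle [Ha Hb]]]].
    exists z. split; [right; left; apply bH_sym; auto|right; right; exists h, (dT y o); split; [auto|split; [split; auto|auto]]]. }
  assert (gB : forall y, exists z, B y -> A z /\ PR z y).
  { intros y. destruct (classic (B y)) as [Hy|Hy]; [|exists x1; intros C; contradiction].
    destruct Hy as [Hy|[Hy|Hy]].
    - destruct (tsplit dT Hm Hz o P1 P2 y T12 Hy) as [Q|Q]; [destruct (L1 y Q) as [z Hz']|destruct (L2 y Q) as [z Hz']]; exists z; auto.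
    - destruct (tsplit dT Hm Hz o P1 P3 y T13 Hy) as [Q|Q]; [destruct (L1 y Q) as [z Hz']|destruct (L3 y Q) as [z Hz']]; exists z; auto.
    - destruct (tsplit dT Hm Hz o P2 P3 y T23 Hy) as [Q|Q]; [destruct (L2 y Q) as [z Hz']|destruct (L3 y Q) as [z Hz']]; exists z; auto. }
  set (g := fun y => proj1_sig (constructive_indefinite_description _ (gB y))).
  assert (gS : forall y, B y -> A (g y) /\ PR (g y) y).
  { intros y Hy. unfold g. destruct (constructive_indefinite_description _ (gB y)) as [z Hz']. simpl. auto. }
  assert (Co := core n dT x1 x2 x3 P1 P2 P3 o E Hm Hz T12 T13 T23). fold PR in Co.
  assert (KE: 4 * c * delta + 2 * delta = 2 * E + 2 * ln 3) by (unfold E; rewrite Hdl; ring).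
  rewrite KE. replace (1 / 1) with 1 by field.
  split; [intros a Ha; apply fA; auto|].
  split.
  { intros a b Ha Hb. destruct (fA a Ha) as [Pa _]. destruct (fA b Hb) as [Pb _].
    destruct (Co _ _ _ _ Pa Pb). split; lra. }
  exists g. split; [intros y Hy; apply gS; auto|].
  split.
  { intros y y' Hy Hy'. destruct (gS y Hy) as [_ Py]. destruct (gS y' Hy') as [_ Py'].
    destruct (Co _ _ _ _ Py Py'). split; lra. }
  split.
  { intros a Ha. destruct (fA a Ha) as [Pa Ba]. destruct (gS _ Ba) as [_ Pg].
    destruct (Co _ _ _ _ Pa Pg). rewrite (dT_refl dT Hm) in *. lra. }
  { intros y Hy. destruct (gS y Hy) as [Ag Pg]. destruct (fA _ Ag) as [Pf _].
    destruct (Co _ _ _ _ Pg Pf). rewrite dH_refl in *. lra. }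
Qed.
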